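(* Let $T$ be any spanning tree of $G$ and let $\tau=\sum_{(i,j)\in T}\frac{r(i,j)}{R(C(i,j))}$ (which equals the total stretch $\mathrm{st}_T(G,\mathbf r)$ of $T$). Let $\epsilon>0$. After $K=\tau\ln(\frac{\tau}{\epsilon})$ iterations, the algorithm Dual KOSZ (run with the tree $T$) returns $\mathbf{x}^K\in\mathbb{R}^V$ and $\mathbf{f}^K\in\mathbb{R}^{\vec E}$ such that $$\mathbb{E}\|\mathbf{x}^*-\mathbf{x}^K\|_{\mathbf L}^2\le \frac{\epsilon}{\tau}\|\mathbf{x}^*\|_{\mathbf L}^2\quad\text{and}\quad \mathbb{E}[\mathcal{E}(\mathbf f^K)]\le(1+\epsilon)\mathcal{E}(\mathbf f^* ),$$ where $\mathbf f^*$ is the minimum-energy $\mathbf b$-flow and $\mathbf x^*$ is any maximizer of $\mathcal B$.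
   Context: $G=(V,E)$ is a connected undirected graph with $n$ vertices and $m$ edges, resistances $r(e)>0$, and $\vec E$ an arbitrary fixed orientation of $E$; for $(i,j)\in\vec E$ set $f(j,i)=-f(i,j)$. A supply vector $\mathbf b\in\mathbb R^V$ satisfies $\sum_i b(i)=0$. A $\mathbf b$-flow is $\mathbf f\in\mathbb R^{\vec E}$ with $\sum_{j:(i,j)\in\vec E}f(i,j)-\sum_{j:(j,i)\in\vec E}f(j,i)=b(i)$ for all $i$. Energy: $\mathcal E(\mathbf f)=\frac12\sum_{e}r(e)f(e)^2$; $\mathbf f^*$ minimizes $\mathcal E$ over $\mathbf b$-flows. $\mathbf L=\sum_{ij\in E}\frac1{r(i,j)}(\mathbf e_i-\mathbf e_j)(\mathbf e_i-\mathbf e_j)^\top$, $\|\mathbf y\|_{\mathbf L}^2=\mathbf y^\top\mathbf L\mathbf y$, $\mathcal B(\mathbf x)=\mathbf b^\top\mathbf x-\frac12\mathbf x^\top\mathbf L\mathbf x$, and $\mathbf x^*$ maximizes $\mathcal B$ (equivalently $\mathbf L\mathbf x^*=\mathbf b$). Stretch: $\mathrm{st}_T(G,\mathbf r)=\sum_{(i,j)\in\vec E}\frac1{r(i,j)}\sum_{(k,l)\in P(i,j)}r(k,l)$, $P(i,j)$ the tree path. Root $T$ arbitrarily and direct tree edges toward the root; for a tree edge $(i,j)$, $C(i,j)$ is the vertex set of the component of $T-ij$ containing $i$. For $C\subset V$: $\delta(C)$ is the set of edges with exactly one endpoint in $C$, $R(C)=(\sum_{e\in\delta(C)}1/r(e))^{-1}$,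 $b(C)=\sum_{v\in C}b(v)$, and for potentials $\mathbf x$, $f_{\mathbf x}(C)=\sum_{ij\in E,\,i\in C,\,j\notin C}\frac{x(i)-x(j)}{r(i,j)}$. The tree-defined flow $\mathbf f_{T,\mathbf x}$ has $f_{T,\mathbf x}(i,j)=\frac{x(i)-x(j)}{r(i,j)}$ on non-tree edges, and on tree edges the unique values making it a $\mathbf b$-flow. Dual KOSZ: set $\mathbf x^0=0$; in each iteration $t$, sample a tree edge $(i,j)$ with probability $P_{ij}=\frac1\tau\cdot\frac{r(i,j)}{R(C(i,j))}$ independently, let $C=C(i,j)$, $\Delta^t=(b(C)-f_{\mathbf x^t}(C))R(C)$, and set $x^{t+1}(v)=x^t(v)+\Delta^t$ for $v\in C$, $x^{t+1}(v)=x^t(v)$ otherwise. After $K$ iterations output $\mathbf x^K$ and $\mathbf f^K=\mathbf f_{T,\mathbf x^K}$. *)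

(* Defs.v *)
From HB Require Import structures.
From mathcomp Require Import all_boot all_order all_algebra.
From mathcomp Require Import reals exp.
Set Implicit Arguments. Unset Strict Implicit. Unset Printing Implicit Defensive.
Import Order.TTheory GRing.Theory Num.Theory.
Local Open Scope ring_scope.

Section Graph.
Variables (R : realType) (n m : nat).
(* Graph G: vertices 'I_n, edges 'I_m; edge e is oriented (src e, dst e) in \vec E. *)
Variables (src dst : 'I_m -> 'I_n) (r : 'I_m -> R) (b : 'I_n -> R).

Definition adj (S : {set 'I_m}) : rel 'I_n := fun u v =>
  [exists e in S, ((src e == u) && (dst e == v)) || ((src e == v) && (dst e == u))].

Definition graph_connected : Prop := forall u v, connect (adj setT) u v.

(* T is a spanning tree: connected on all vertices and every edge is a bridge
   (removing it disconnects its endpoints), i.e. acyclic. *)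
Definition spanning_tree (T : {set 'I_m}) : Prop :=
  (forall u v, connect (adj T) u v) /\
  (forall e, e \in T -> ~~ connect (adj (T :\ e)) (src e) (dst e)).

(* C(e) for a tree edge e, with T rooted at root and tree edges directed to the
   root: the component of T - e not containing the root (it contains the child). *)
Definition Ccomp (T : {set 'I_m}) (root : 'I_n) (e : 'I_m) : {set 'I_n} :=
  [set v | ~~ connect (adj (T :\ e)) v root].

Definition crosses (C : {set 'I_n}) (e : 'I_m) : bool :=
  (src e \in C) != (dst e \in C).

Definition Rres (C : {set 'I_n}) : R := (\sum_(e < m | crosses C e) (r e)^-1)^-1.

Definition bset (C : {set 'I_n}) : R := \sum_(v in C) b v.

Definition fx (x : 'I_n -> R) (C : {set 'I_n}) : R :=
  \sum_(e < m)
    (if (src e \in C) && (dst e \notin C) then (x (src e) - x (dst e)) / r e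
     else if (dst e \in C) && (src e \notin C) then (x (dst e) - x (src e)) / r e
     else 0).

Definition is_bflow (f : 'I_m -> R) : Prop :=
  forall i, \sum_(e < m | src e == i) f e - \sum_(e < m | dst e == i) f e = b i.

Definition energy (f : 'I_m -> R) : R := 2^-1 * \sum_(e < m) r e * f e ^+ 2.

Definition chi (i : 'I_n) : 'cV[R]_n := delta_mx i 0.
Definition Lap : 'M[R]_n :=
  \sum_(e < m) (r e)^-1 *: ((chi (src e) - chi (dst e)) *m (chi (src e) - chi (dst e))^T).
Definition cvec (x : 'I_n -> R) : 'cV[R]_n := \col_i x i.
Definition quadL (x : 'I_n -> R) : R := ((cvec x)^T *m Lap *m cvec x) 0 0.
Definition Lnorm2 (y : 'I_n -> R) : R := quadL y.
Definition Bfun (x : 'I_n -> R) : R := \sum_i b i * x i - 2^-1 * quadL x.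

Definition tau (T : {set 'I_m}) (root : 'I_n) : R :=
  \sum_(e in T) r e / Rres (Ccomp T root e).

(* sampling probability of edge e (zero for non-tree edges) *)
Definition Pe (T : {set 'I_m}) (root : 'I_n) (e : 'I_m) : R :=
  if e \in T then (tau T root)^-1 * (r e / Rres (Ccomp T root e)) else 0.

Definition kosz_step (T : {set 'I_m}) (root : 'I_n) (x : 'I_n -> R) (e : 'I_m)
  : 'I_n -> R :=
  let C := Ccomp T root e in
  let Delta := (bset C - fx x C) * Rres C in
  fun v => if v \in C then x v + Delta else x v.

Definition kosz_x (T : {set 'I_m}) (root : 'I_n) (K : nat) (s : {ffun 'I_K -> 'I_m})
  : 'I_n -> R :=
  foldl (kosz_step T root) (fun _ => 0) [seq s k | k <- enum 'I_K].

(* probability of the sample sequence s (independent samples) *)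
Definition seq_prob (T : {set 'I_m}) (root : 'I_n) (K : nat) (s : {ffun 'I_K -> 'I_m}) : R :=
  \prod_(k < K) Pe T root (s k).

Definition Exp (T : {set 'I_m}) (root : 'I_n) (K : nat) (g : {ffun 'I_K -> 'I_m} -> R) : R :=
  \sum_(s : {ffun 'I_K -> 'I_m}) seq_prob T root s * g s.

(* f is the tree-defined flow f_{T,x}: potential flow on non-tree edges, and on
   tree edges the (unique) values making it a b-flow *)
Definition tree_defined_flow (T : {set 'I_m}) (x : 'I_n -> R) (f : 'I_m -> R) : Prop :=
  is_bflow f /\ (forall e, e \notin T -> f e = (x (src e) - x (dst e)) / r e).

End Graph.

(* Main.v *)
Require Import Defs.
From HB Require Import structures.
From mathcomp Require Import all_boot all_order all_algebra.
From mathcomp Require Import reals exp.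
From mathcomp Require Import sequences.
From mathcomp Require Import ring lra.
Import Order.TTheory GRing.Theory Num.Theory.
Local Open Scope ring_scope.

Module A.
Set Implicit Arguments. Unset Strict Implicit. Unset Printing Implicit Defensive.

Section Alg.
Variables (R : realType) (n m : nat) (src dst : 'I_m -> 'I_n) (r : 'I_m -> R) (b : 'I_n -> R).
Hypothesis rpos : forall e, 0 < r e.

Definition dx (x : 'I_n -> R) e := x (src e) - x (dst e).
Definition qf (x : 'I_n -> R) := \sum_e dx x e ^+ 2 / r e.
Definition bil (x y : 'I_n -> R) := \sum_e dx x e * dx y e / r e.
Definition ind (C : {set 'I_n}) (v : 'I_n) : R := if v \in C then 1 else 0.

Lemma rneq0 e : r e != 0. Proof. by rewrite gt_eqF. Qed.

Lemma quadL_E x : quadL src dst r x = qf x.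
Proof.
rewrite /quadL /Lap mulmx_sumr mulmx_suml summxE /qf; apply: eq_bigr => e _.
rewrite -scalemxAr -scalemxAl mxE.
set u := chi R (src e) - chi R (dst e).
rewrite mulmxA -[_ *m u^T *m _]mulmxA.
have h2 : (u^T *m cvec x) = ((cvec x)^T *m u)^T.
  by rewrite trmx_mul trmxK.
have h1 : forall i j : 'I_1, ((cvec x)^T *m u) i j = dx x e.
  by move=> i j; rewrite /u mulmxBr /chi -!colE !mxE.
rewrite h2 [X in _ * X = _]mxE big_ord1 [X in _ * (_ * X)]mxE !h1 mulrC expr2 //.
Qed.

Lemma dx_lin x y t e : dx (fun v => x v + t * y v) e = dx x e + t * dx y e.
Proof. rewrite /dx; ring. Qed.

Lemma qf_lin x y t : qf (fun v => x v + t * y v) = qf x + 2 * t * bil x y + t ^+ 2 * qf y.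
Proof.
rewrite /qf /bil mulr_sumr mulr_sumr -!big_split /=; apply: eq_bigr => e _.
rewrite dx_lin; have := rneq0 e; move=> h; by field.
Qed.

Lemma Bfun_E x : Bfun src dst r b x = \sum_i b i * x i - 2^-1 * qf x.
Proof. by rewrite /Bfun quadL_E. Qed.

Lemma Bfun_lin x y t : Bfun src dst r b (fun v => x v + t * y v) =
  Bfun src dst r b x + t * (\sum_i b i * y i - bil x y) - t ^+ 2 / 2 * qf y.
Proof.
rewrite !Bfun_E qf_lin.
have -> : \sum_i b i * (x i + t * y i) = \sum_i b i * x i + t * \sum_i b i * y i.
  rewrite mulr_sumr -big_split; apply: eq_bigr => i _ /=; ring.
field; by rewrite ?pnatr_eq0.
Qed.

Lemma qf_ge0 x : 0 <= qf x.
Proof. apply: sumr_ge0 => e _; apply: divr_ge0; [exact: sqr_ge0 | exact: ltW]. Qed.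

Lemma firstorder xs : (forall x, Bfun src dst r b x <= Bfun src dst r b xs) ->
  forall y, \sum_i b i * y i = bil xs y.
Proof.
move=> hmax y; apply/eqP; rewrite -subr_eq0; apply/eqP.
set c := _ - _; set q := qf y.
have q0 : 0 <= q by exact: qf_ge0.
set t := c / (q + 1).
have hq1 : 0 < q + 1 by lra.
have ct : c = t * (q + 1) by rewrite /t divfK // gt_eqF.
have := hmax (fun v => xs v + t * y v); rewrite Bfun_lin -/c -/q => H.
have Ht : t ^+ 2 * (q / 2 + 1) <= 0.
  have -> : t ^+ 2 * (q / 2 + 1) = t * c - t ^+ 2 / 2 * q by rewrite ct; field.
  lra.
have : t ^+ 2 <= 0.
  have hp : 0 < q / 2 + 1 by apply: ltr_wpDl => //; apply: divr_ge0.
  have t2 : 0 <= t ^+ 2 by exact: sqr_ge0.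
  nra.
rewrite le_eqVlt ltNge sqr_ge0 orbF sqrf_eq0 => /eqP t0.
by rewrite ct t0 mul0r.
Qed.

Lemma wd f : is_bflow src dst b f -> forall x, \sum_i b i * x i = \sum_e f e * dx x e.
Proof.
move=> hf x.
have -> : \sum_i b i * x i = \sum_i (\sum_(e < m | src e == i) f e - \sum_(e < m | dst e == i) f e) * x i.
  by apply: eq_bigr => i _; rewrite hf.
have ex : forall (g : 'I_m -> 'I_n), \sum_i (\sum_(e < m | g e == i) f e) * x i = \sum_e f e * x (g e).
  move=> g; under eq_bigr do rewrite mulr_suml.
  rewrite (exchange_big_dep xpredT) //=; apply: eq_bigr => e _.
  by rewrite (big_pred1 (g e)) // => v /=; rewrite eq_sym.
under eq_bigr do rewrite mulrBl.
rewrite sumrB !ex -sumrB; apply: eq_bigr => e _; rewrite /dx; ring.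
Qed.

Lemma gap_id f x : is_bflow src dst b f ->
  energy r f - Bfun src dst r b x = 2^-1 * \sum_e r e * (f e - dx x e / r e) ^+ 2.
Proof.
move=> hf; rewrite Bfun_E (wd hf) /energy /qf !mulr_sumr -!sumrB.
apply: eq_bigr => e _; have := rneq0 e => h; by field.
Qed.

Lemma bil_qf x : bil x x = qf x.
Proof. by apply: eq_bigr => e _; rewrite expr2. Qed.

Lemma Bstar_val xs : (forall x, Bfun src dst r b x <= Bfun src dst r b xs) ->
  Bfun src dst r b xs = 2^-1 * qf xs.
Proof. move=> h; rewrite Bfun_E (firstorder h) bil_qf; field; by rewrite ?pnatr_eq0. Qed.

Lemma Bopt xs : (forall x, Bfun src dst r b x <= Bfun src dst r b xs) ->
  forall x, Bfun src dst r b xs - Bfun src dst r b x = 2^-1 * qf (fun v => xs v - x v).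
Proof.
move=> h x.
have -> : x = (fun v => xs v + (-1) * (xs v - x v)) by apply: boolp.funext => v; ring.
rewrite Bfun_lin (firstorder h) subrr.
have -> : (fun v => xs v - (xs v + -1 * (xs v - x v))) = (fun v => xs v - x v).
  by apply: boolp.funext => v; ring.
field; by rewrite ?pnatr_eq0.
Qed.

Lemma bset_ind C : bset b C = \sum_i b i * ind C i.
Proof.
rewrite /bset big_mkcond /=; apply: eq_bigr => i _; rewrite /ind.
by case: (i \in C); rewrite ?mulr1 ?mulr0.
Qed.

Lemma fx_bil x C : fx src dst r x C = bil x (ind C).
Proof.
apply: eq_bigr => e _; rewrite /dx /ind.
case: (src e \in C); case: (dst e \in C) => /=; field; exact: rneq0.
Qed.

Lemma qf_ind C : qf (ind C) = \sum_(e < m | crosses src dst C e) (r e)^-1.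
Proof.
rewrite [RHS]big_mkcond; apply: eq_bigr => e _; rewrite /dx /ind /crosses.
case: (src e \in C); case: (dst e \in C) => /=; field; exact: rneq0.
Qed.

Lemma step_gain C x :
  Bfun src dst r b (fun v => x v + ((bset b C - fx src dst r x C) * Rres src dst r C) * ind C v)
  - Bfun src dst r b x = 2^-1 * Rres src dst r C * (bset b C - fx src dst r x C) ^+ 2.
Proof.
rewrite Bfun_lin -bset_ind -fx_bil qf_ind /Rres.
set S := \sum_(e < m | _) _; set g := (bset b C - fx src dst r x C).
have [->|S0] := eqVneq S 0; first by rewrite invr0; ring.
by field.
Qed.
End Alg.

End A.
Import A.

Module G.
Set Implicit Arguments. Unset Strict Implicit. Unset Printing Implicit Defensive.

Section Gr.
Variables (n m : nat) (src dst : 'I_m -> 'I_n) (T : {set 'I_m}) (root : 'I_n).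

Lemma adjP (S : {set 'I_m}) u v : reflect (exists2 e, e \in S & ((src e == u) && (dst e == v)) || ((src e == v) && (dst e == u))) (adj src dst S u v).
Proof. exact: (iffP exists_inP). Qed.

Lemma adj_sym (S : {set 'I_m}) : symmetric (adj src dst S).
Proof.
move=> u v; apply/adjP/adjP => -[e he h]; exists e => //; by rewrite orbC.
Qed.

Lemma csym (S : {set 'I_m}) : connect_sym (adj src dst S).
Proof. exact/sym_connect_sym/adj_sym. Qed.

Lemma closure_path (S : {set 'I_m}) (P : pred 'I_n) : (forall a c, adj src dst S a c -> P a -> P c) ->
  forall u v, connect (adj src dst S) u v -> P u -> P v.
Proof.
move=> hP u v /connectP [p hp ->] {v}; elim: p u hp => //= a p IH u /andP [h1 h2] Pu.
exact: (IH a h2 (hP _ _ h1 Pu)).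
Qed.

Hypothesis tree : spanning_tree src dst T.

Lemma G1 e e' : e' \in T -> e' != e ->
  (src e' \in Ccomp src dst T root e) = (dst e' \in Ccomp src dst T root e).
Proof.
move=> he' ne; rewrite !inE; congr (~~ _).
have a : adj src dst (T :\ e) (src e') (dst e').
  by apply/adjP; exists e'; rewrite ?inE ?ne ?he' ?eqxx.
apply/idP/idP => h.
- apply: connect_trans h; rewrite csym; exact: connect1.
- apply: connect_trans h; exact: connect1.
Qed.

Lemma root_notin e : root \notin Ccomp src dst T root e.
Proof. by rewrite inE negbK connect0. Qed.

Lemma G2 e : e \in T -> (src e \in Ccomp src dst T root e) != (dst e \in Ccomp src dst T root e).
Proof.
move=> he; case: tree => conn br; have nb := br e he.
set c := connect (adj src dst (T :\ e)).
have notboth : ~~ (c (src e) root && c (dst e) root).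
  apply/negP => /andP [h1 h2]; move/negP: nb; apply; apply: connect_trans h1 _.
  by rewrite csym.
have one : c root (src e) || c root (dst e).
  have := @closure_path T (fun v => c v (src e) || c v (dst e)) _ (src e) root (conn _ _).
  apply; last by rewrite /c connect0.
  move=> a x /adjP [e' he' hh] /orP Pa.
  have [ee|ne] := eqVneq e' e.
    subst e'; case/orP: hh => /andP [/eqP h1 /eqP h2]; [rewrite -h2 | rewrite -h1]; by rewrite /c connect0 ?orbT.
  have ax : adj src dst (T :\ e) x a.
    rewrite adj_sym; apply/adjP; exists e' => //; by rewrite !inE ne he'.
  apply/orP; case: Pa => h; [left | right]; exact: connect_trans (connect1 ax) h.
rewrite !inE -/c.
move: notboth one; rewrite ![c root _]csym.
rewrite -/c; by case: (c (src e) root); case: (c (dst e) root).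
Qed.
End Gr.

End G.
Import G.

Module M.
Set Implicit Arguments. Unset Strict Implicit. Unset Printing Implicit Defensive.

Section Main.
Variables (R : realType) (n m : nat) (src dst : 'I_m -> 'I_n) (r : 'I_m -> R) (b : 'I_n -> R).
Variables (T : {set 'I_m}) (root : 'I_n).
Hypothesis rpos : forall e, 0 < r e.
Hypothesis tree : spanning_tree src dst T.

Local Notation C e := (Ccomp src dst T root e).
Local Notation dx := (dx src dst).
Local Notation bil := (bil src dst r).
Local Notation qf := (qf src dst r).
Local Notation B := (Bfun src dst r b).
Local Notation ind := (ind R).

Definition sig e : R := dx (ind (C e)) e.

Lemma sig_off e e' : e' \in T -> e' != e -> dx (ind (C e)) e' = 0.
Proof. by move=> h1 h2; rewrite /dx /ind (G1 src dst root h1 h2) subrr. Qed.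

Lemma sig2 e : e \in T -> sig e ^+ 2 = 1.
Proof.
move=> he; have := G2 root tree he; rewrite /sig /dx /ind.
by case: (src e \in C e); case: (dst e \in C e) => //= _; rewrite ?subr0 ?sub0r ?sqrrN expr1n.
Qed.

Lemma G3 (h : 'I_n -> R) : (forall e, e \in T -> h (src e) = h (dst e)) -> forall v, h v = h root.
Proof.
move=> hh v; case: tree => conn _.
have hP : forall a c, adj src dst T a c -> (fun u => h u == h root) a -> (fun u => h u == h root) c.
  move=> a c /(adjP src dst) [e he /orP [] /andP [/eqP h1 /eqP h2]] /eqP <-; apply/eqP;
  by rewrite -h1 -h2 hh.
have := closure_path hP (conn root v); rewrite /= eqxx => H.
by apply/eqP; apply: H.
Qed.

Lemma S_pos e : e \in T -> 0 < \sum_(e' < m | crosses src dst (C e) e') (r e')^-1.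
Proof.
move=> he; rewrite (bigD1 e) /=; last by move: (G2 root tree he).
apply: ltr_pwDl; first by rewrite invr_gt0.
by apply: sumr_ge0 => i _; rewrite invr_ge0 ltW.
Qed.

Lemma term_ge1 e : e \in T -> 1 <= r e / Rres src dst r (C e).
Proof.
move=> he; rewrite /Rres invrK.
have : (r e)^-1 <= \sum_(e' < m | crosses src dst (C e) e') (r e')^-1.
  rewrite (bigD1 e) /=; last by move: (G2 root tree he).
  rewrite lerDl; by apply: sumr_ge0 => i _; rewrite invr_ge0 ltW.
move=> h; by rewrite -[X in X <= _](mulfV (rneq0 rpos e)) ler_pM2l.
Qed.

Definition g x e := bset b (C e) - fx src dst r x (C e).
Definition gap x := 2^-1 * \sum_(e in T) r e * g x e ^+ 2.
Local Notation tau := (tau src dst r T root).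
Local Notation Pe := (Pe src dst r T root).

Lemma Rres_pos e : e \in T -> 0 < Rres src dst r (C e).
Proof. by move=> he; rewrite /Rres invr_gt0 S_pos. Qed.

Lemma Rres_ge0 e : 0 <= Rres src dst r (C e).
Proof. by rewrite /Rres invr_ge0; apply: sumr_ge0 => i _; rewrite invr_ge0 ltW. Qed.

Lemma tau_ge0 : 0 <= tau.
Proof. apply: sumr_ge0 => e he; exact: le_trans (term_ge1 he). Qed.

Lemma tau_ge1 e0 : e0 \in T -> 1 <= tau.
Proof.
move=> he0; rewrite /Defs.tau (bigD1 e0) //=; apply: le_trans (term_ge1 he0) _.
rewrite lerDl; apply: sumr_ge0 => e /andP [he _]; exact: le_trans (term_ge1 he).
Qed.

Lemma Pe_ge0 e : 0 <= Pe e.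
Proof.
rewrite /Defs.Pe; case: ifP => // he; apply: mulr_ge0; first by rewrite invr_ge0 tau_ge0.
by apply: divr_ge0; [exact: ltW | exact: Rres_ge0].
Qed.

Lemma Pe_sum : 0 < tau -> \sum_e Pe e = 1.
Proof.
move=> tp; rewrite /Defs.Pe -big_mkcond /= -mulr_sumr.
by rewrite mulVf // gt_eqF.
Qed.

Lemma step_E x e : kosz_step src dst r b T root x e =
  (fun v => x v + (g x e * Rres src dst r (C e)) * ind (C e) v).
Proof.
apply: boolp.funext => v; rewrite /kosz_step /ind /g; case: ifP => _; ring.
Qed.

Lemma gain_exp x : \sum_e Pe e * (B (kosz_step src dst r b T root x e) - B x) = tau^-1 * gap x.
Proof.
rewrite /gap /Defs.Pe big_mkcond [in RHS]big_mkcond /= !mulr_sumr; apply: eq_bigr => e _.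
case: ifP => he; last by rewrite !mul0r !mulr0.
rewrite step_E /g step_gain //; have := Rres_pos he => hR.
have := rneq0 rpos e => hr; have ht : 0 < tau by apply: lt_le_trans (tau_ge1 he).
field; by rewrite !gt_eqF.
Qed.

Lemma gap_le xs x : (forall y, B y <= B xs) -> 0 < tau -> gap x <= tau * (B xs - B x).
Proof.
move=> hmax tp.
have h : tau^-1 * gap x <= B xs - B x.
  rewrite -gain_exp -[X in _ <= X]mul1r -(Pe_sum tp) mulr_suml.
  apply: ler_sum => e _; apply: ler_wpM2l; first exact: Pe_ge0.
  by rewrite lerD2r hmax.
have ti : 0 < tau^-1 by rewrite invr_gt0.
by rewrite -(ler_pM2l ti) mulKf ?gt_eqF.
Qed.

Lemma bil_subl x y z : bil x z - bil y z = bil (fun v => x v - y v) z.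
Proof.
rewrite /A.bil -sumrB; apply: eq_bigr => e _; rewrite /A.dx.
have := rneq0 rpos e => hr; by field.
Qed.

Lemma g_bil xs x e : (forall y, B y <= B xs) ->
  g x e = bil (fun v => xs v - x v) (ind (C e)).
Proof. by move=> h; rewrite /g bset_ind (firstorder rpos h) fx_bil // bil_subl. Qed.

Lemma Qlemma z : qf z <= \sum_(e in T) r e * bil z (ind (C e)) ^+ 2.
Proof.
pose w v := z root + \sum_(e in T) sig e * dx z e * ind (C e) v.
have dxw e' : dx w e' = \sum_(e in T) sig e * dx z e * dx (ind (C e)) e'.
  rewrite /A.dx /w /= opprD addrACA subrr add0r -sumrB; apply: eq_bigr => e _; rewrite /A.dx; ring.
have wz v : w v = z v.
  have := @G3 (fun v => w v - z v) _ v; rewrite /=.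
  have -> : w root = z root.
    rewrite /w big1 ?addr0 // => e _; by rewrite /ind (negbTE (root_notin _ _ _ _ _)) mulr0.
  rewrite subrr => H; apply/eqP; rewrite -subr_eq0; apply/eqP; apply: H.
  move=> e' he'; apply/eqP; rewrite -subr_eq0; apply/eqP.
  have : dx w e' = dx z e'.
    rewrite dxw (bigD1 e') //= big1 ?addr0.
      by rewrite -mulrA mulrC -mulrA [_ * sig e']mulrC -expr2 sig2 // mulr1.
    move=> e /andP [_ ne]; rewrite sig_off ?mulr0 //; by rewrite eq_sym.
  rewrite /A.dx => h; rewrite -[RHS]subr0 -(subrr (w (dst e') - z (dst e'))).
  rewrite {1}(_ : w (src e') = w (dst e') + (z (src e') - z (dst e'))); first ring.
  by rewrite -h; ring.
have hq : qf z = \sum_(e in T) sig e * dx z e * bil z (ind (C e)).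
  rewrite -bil_qf.
  have -> : A.bil src dst r z z = A.bil src dst r z w.
    by apply: eq_bigr => e _; rewrite /A.dx !wz.
  rewrite /A.bil; under eq_bigr do rewrite dxw mulr_sumr mulr_suml.
  rewrite exchange_big /=; apply: eq_bigr => e _; rewrite mulr_sumr.
  apply: eq_bigr => e' _; ring.
have hsub : \sum_(e in T) dx z e ^+ 2 / r e <= qf z.
  rewrite /A.qf [X in _ <= X](bigID (fun e => e \in T)) /= lerDl.
  apply: sumr_ge0 => e _; apply: divr_ge0; [exact: sqr_ge0 | exact: ltW].
have hterm : \sum_(e in T) sig e * dx z e * bil z (ind (C e)) <=
    2^-1 * \sum_(e in T) dx z e ^+ 2 / r e + 2^-1 * \sum_(e in T) r e * bil z (ind (C e)) ^+ 2.
  rewrite !mulr_sumr -big_split /=; apply: ler_sum => e he.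
  set s := sig e; set d := dx z e; set F := bil z (ind (C e)).
  have hr := rpos e; have hr0 := rneq0 rpos e.
  have h0 : 0 <= r e * (s * d / r e - F) ^+ 2 by apply: mulr_ge0; [exact: ltW | exact: sqr_ge0].
  have E : r e * (s * d / r e - F) ^+ 2 = s ^+ 2 * d ^+ 2 / r e - 2 * (s * d * F) + r e * F ^+ 2.
    by field.
  rewrite sig2 // mul1r in E; lra.
lra.
Qed.

Lemma gap_ge xs x : (forall y, B y <= B xs) -> B xs - B x <= gap x.
Proof.
move=> h; rewrite (Bopt rpos h) /gap; apply: ler_wpM2l; first by rewrite invr_ge0.
apply: le_trans (Qlemma _) _; apply: ler_sum => e _; by rewrite (g_bil _ _ h).
Qed.

Lemma tdf_energy x f : tree_defined_flow src dst r b T x f -> energy r f - B x = gap x.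
Proof.
move=> [hf hoff]; rewrite (gap_id rpos _ hf) /gap; congr (_ * _).
rewrite [RHS]big_mkcond; apply: eq_bigr => e _ /=.
case: ifP => he; last by rewrite hoff ?he // subrr expr0n /= mulr0.
congr (_ * _).
have hg : g x e = (f e - dx x e / r e) * sig e.
  rewrite /g bset_ind (wd hf) fx_bil // /A.bil -sumrB (bigD1 e) //= big1 ?addr0.
    rewrite /sig; have := rneq0 rpos e => hr; by field.
  move=> e' ne'; case: (boolP (e' \in T)) => he'.
    rewrite sig_off //; by rewrite !mulr0 ?mul0r subrr.
  rewrite hoff // /A.dx; have := rneq0 rpos e' => hr; by field.
by rewrite hg exprMn sig2 // mulr1.
Qed.
End Main.

End M.
Import M.

Module E.
Set Implicit Arguments. Unset Strict Implicit. Unset Printing Implicit Defensive.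

Section ExpRec.
Variables (R : realType) (m : nat) (P : 'I_m -> R).

Definition phi K (p : {ffun 'I_K -> 'I_m} * 'I_m) : {ffun 'I_K.+1 -> 'I_m} :=
  [ffun i => if unlift ord_max i is Some j then p.1 j else p.2].
Definition psi K (t : {ffun 'I_K.+1 -> 'I_m}) : {ffun 'I_K -> 'I_m} * 'I_m :=
  ([ffun j => t (widen_ord (leqnSn K) j)], t ord_max).

Lemma widen_lift K (j : 'I_K) : widen_ord (leqnSn K) j = lift ord_max j.
Proof. apply: val_inj; rewrite /= /bump; by case: leqP => //; rewrite leqNgt ltn_ord. Qed.

Lemma phi_widen K p (j : 'I_K) : phi p (widen_ord (leqnSn K) j) = p.1 j.
Proof. by rewrite ffunE widen_lift liftK. Qed.

Lemma phi_max K p : phi (K:=K) p ord_max = p.2.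
Proof. by rewrite ffunE unlift_none. Qed.

Lemma Exp_rec K (G : seq 'I_m -> R) :
  \sum_(s : {ffun 'I_K.+1 -> 'I_m}) (\prod_(k < K.+1) P (s k)) * G [seq s k | k <- enum 'I_K.+1]
  = \sum_(s : {ffun 'I_K -> 'I_m}) (\prod_(k < K) P (s k)) *
      \sum_e P e * G (rcons [seq s k | k <- enum 'I_K] e).
Proof.
have bij : bijective (@phi K).
  exists (@psi K).
    move=> [s e]; rewrite /psi phi_max; congr (_, _); apply/ffunP => j.
    by rewrite ffunE phi_widen.
  move=> t; apply/ffunP => i; rewrite ffunE /psi.
  case: unliftP => [j ->|->] /= //.
  by rewrite ffunE widen_lift.
rewrite (reindex (@phi K)) /=; last by apply: onW_bij.
under [RHS]eq_bigr do rewrite mulr_sumr.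
rewrite pair_big /=; apply: eq_bigr => -[s e] _ /=.
rewrite big_ord_recr /= enum_ordSr map_rcons -map_comp phi_max.
under eq_bigr do rewrite phi_widen.
rewrite mulrA; congr (_ * G (rcons _ _)).
by apply: eq_map => j /=; rewrite phi_widen.
Qed.

Lemma Exp0 (G : seq 'I_m -> R) :
  \sum_(s : {ffun 'I_0 -> 'I_m}) (\prod_(k < 0) P (s k)) * G [seq s k | k <- enum 'I_0] = G [::].
Proof.
have h s : (\prod_(k < 0) P (s k)) * G [seq s k | k <- enum 'I_0] = G [::].
  rewrite big_ord0 mul1r; congr G; apply/nilP; by rewrite /nilp size_map size_enum_ord.
under eq_bigr do rewrite h.
by rewrite sumr_const card_ffun !card_ord expn0.
Qed.
End ExpRec.

End E.
Import E.


Theorem theorem1 (R : realType) (n m : nat) (src dst : 'I_m -> 'I_n)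
    (r : 'I_m -> R) (b : 'I_n -> R) (T : {set 'I_m}) (root : 'I_n)
    (eps : R) (K : nat) (xstar : 'I_n -> R) (fstar : 'I_m -> R)
    (fK : {ffun 'I_K -> 'I_m} -> 'I_m -> R) :
  (forall e, 0 < r e) ->
  (forall e, src e != dst e) ->
  graph_connected src dst ->
  \sum_i b i = 0 ->
  spanning_tree src dst T ->
  0 < eps ->
  tau src dst r T root * ln (tau src dst r T root / eps) <= K%:R ->
  (forall x, Bfun src dst r b x <= Bfun src dst r b xstar) ->
  is_bflow src dst b fstar ->
  (forall f, is_bflow src dst b f -> energy r fstar <= energy r f) ->
  (forall s : {ffun 'I_K -> 'I_m}, tree_defined_flow src dst r b T (kosz_x src dst r b T root s) (fK s)) ->
  Exp src dst r T root
      (fun s : {ffun 'I_K -> 'I_m} => Lnorm2 src dst r (fun v => xstar v - kosz_x src dst r b T root s v))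
    <= eps / tau src dst r T root * Lnorm2 src dst r xstar
  /\
  Exp src dst r T root (fun s : {ffun 'I_K -> 'I_m} => energy r (fK s))
    <= (1 + eps) * energy r fstar.
Proof.
move=> rpos hsd _ _ htree heps hK hmax hfs _ hfK.
set tau := Defs.tau src dst r T root.
set B := Bfun src dst r b.
set Bs := B xstar.
have B0 : B (fun _ => 0) = 0.
  rewrite /B Bfun_E big1 ?sub0r; last by move=> i _; rewrite mulr0.
  rewrite /A.qf big1 ?mulr0 ?oppr0 // => e _; by rewrite /A.dx subrr expr0n /= mul0r.
have Bs0 : 0 <= Bs by rewrite -B0; exact: hmax.
have Bsf : Bs <= energy r fstar.
  rewrite -subr_ge0 (gap_id rpos _ hfs); apply: mulr_ge0; first by rewrite invr_ge0.
  by apply: sumr_ge0 => e _; apply: mulr_ge0; [exact: ltW | exact: sqr_ge0].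
case: (pickP (fun e => e \in T)) => [e0 he0 | noT]; last first.
  have nom : forall e : 'I_m, False.
    move=> e; case: htree => conn _.
    have hP : forall a c, adj src dst T a c -> (fun v => v == src e) a -> (fun v => v == src e) c.
      by move=> a c /(adjP src dst) [e' he' _]; rewrite noT in he'.
    have := closure_path hP (conn (src e) (dst e)); rewrite /= eqxx => /(_ isT) /eqP h.
    by move: (hsd e); rewrite h eqxx.
  have q0 : forall x, Lnorm2 src dst r x = 0.
    by move=> x; rewrite /Lnorm2 quadL_E /A.qf big1 // => e; case: (nom e).
  have en0 : forall f, energy r f = 0.
    by move=> f; rewrite /energy big1 ?mulr0 // => e; case: (nom e).
  rewrite /Exp q0 en0 !mulr0; split.
    by rewrite big1 // => s _; rewrite q0 mulr0.
  by rewrite big1 // => s _; rewrite en0 mulr0.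
have t1 : 1 <= tau by exact: (tau_ge1 root rpos htree he0).
have tp : 0 < tau by apply: lt_le_trans t1.
have ti : 0 < tau^-1 by rewrite invr_gt0.
set a := 1 - tau^-1.
have a0 : 0 <= a by rewrite /a subr_ge0 invf_le1.
have inner : forall x, \sum_e Pe src dst r T root e * (Bs - B (kosz_step src dst r b T root x e)) <= a * (Bs - B x).
  move=> x.
  have e1 : \sum_e Pe src dst r T root e * (Bs - B (kosz_step src dst r b T root x e))
      = (Bs - B x) - tau^-1 * gap src dst r b T root x.
    rewrite -(gain_exp b root rpos htree x) -[Bs - B x]mul1r -(Pe_sum tp) mulr_suml -sumrB.
    by apply: eq_bigr => e _; rewrite /B /Bs; ring.
  rewrite e1 /a; have := gap_ge root rpos htree x hmax; rewrite -/B -/Bs => hg.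
  have : tau^-1 * (Bs - B x) <= tau^-1 * gap src dst r b T root x by rewrite ler_pM2l.
  lra.
pose D k := \sum_(s : {ffun 'I_k -> 'I_m}) seq_prob src dst r T root s * (Bs - B (kosz_x src dst r b T root s)).
pose G (l : seq 'I_m) := Bs - B (foldl (kosz_step src dst r b T root) (fun _ => 0) l).
have Dk : forall k, D k <= a ^+ k * Bs.
  elim=> [|k IH].
    by rewrite /D /seq_prob /kosz_x (Exp0 (Pe src dst r T root) G) /G /= B0 subr0 expr0 mul1r.
  rewrite /D /seq_prob /kosz_x (Exp_rec (Pe src dst r T root) k G) exprS -mulrA.
  apply: le_trans (ler_wpM2l a0 IH); rewrite /D mulr_sumr; apply: ler_sum => s _.
  rewrite mulrCA; apply: ler_wpM2l; first by apply: prodr_ge0 => i _; exact: Pe_ge0.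
  under eq_bigr do rewrite /G foldl_rcons.
  exact: inner.
have Psum : forall k, \sum_(s : {ffun 'I_k -> 'I_m}) seq_prob src dst r T root s = 1.
  elim=> [|k IH].
    under eq_bigr do rewrite -[seq_prob _ _ _ _ _ _]mulr1.
    exact: (Exp0 (Pe src dst r T root) (fun _ => 1)).
  under eq_bigr do rewrite -[seq_prob _ _ _ _ _ _]mulr1.
  rewrite /seq_prob (Exp_rec (Pe src dst r T root) k (fun _ => 1)).
  under eq_bigr do rewrite (eq_bigr _ (fun e _ => mulr1 _)) (Pe_sum tp) mulr1.
  exact: IH.
have aK : a ^+ K <= eps / tau.
  have ea : a <= expR (- tau^-1) by rewrite /a; have := expR_ge1Dx (- tau^-1); lra.
  have h1 : a ^+ K <= expR (- tau^-1) ^+ K.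
    by apply: lerXn2r => //; rewrite nnegrE // expR_ge0.
  apply: le_trans h1 _; rewrite -expRM_natr.
  have tpe : 0 < tau / eps by apply: divr_gt0.
  have -> : eps / tau = expR (- ln (tau / eps)).
    by rewrite expRN lnK ?invf_div // posrE.
  rewrite ler_expR mulNr lerN2 [X in _ <= X]mulrC.
  idtac.
  by rewrite ler_pdivlMr // mulrC.
have DK : D K <= eps / tau * Bs.
  apply: le_trans (Dk K) _; apply: ler_wpM2r => //.
split.
  have -> : Exp src dst r T root (fun s : {ffun 'I_K -> 'I_m} => Lnorm2 src dst r (fun v => xstar v - kosz_x src dst r b T root s v)) = 2 * D K.
    rewrite /Exp /D mulr_sumr; apply: eq_bigr => s _.
    rewrite /Lnorm2 quadL_E.
    have := Bopt rpos hmax (kosz_x src dst r b T root s); rewrite -/B -/Bs => ->.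
    field; by rewrite ?pnatr_eq0.
  rewrite /Lnorm2 quadL_E.
  have hv := Bstar_val rpos hmax; rewrite -/B -/Bs in hv.
  have -> : A.qf src dst r xstar = 2 * Bs by rewrite hv; field.
  have : 0 <= eps / tau by apply: divr_ge0 => //; exact: ltW.
  nra.
apply: le_trans (_ : Bs + tau * D K <= _).
  rewrite /Exp /D mulr_sumr -[X in _ <= X + _]mulr1 -(Psum K) mulr_sumr -big_split /=.
  apply: ler_sum => s _.
  set p := seq_prob _ _ _ _ _ s; set xK := kosz_x _ _ _ _ _ _ s.
  have -> : Bs * p + tau * (p * (Bs - B xK)) = p * (Bs + tau * (Bs - B xK)) by ring.
  apply: ler_wpM2l.
    by apply: prodr_ge0 => i _; exact: Pe_ge0.
  have he := tdf_energy root rpos htree (hfK s).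
  have hl := gap_le rpos htree (kosz_x src dst r b T root s) hmax tp.
  have hB := hmax (kosz_x src dst r b T root s).
  rewrite -/B -/Bs -/tau in he hl hB.
  lra.
have : tau * D K <= eps * Bs.
  apply: le_trans (ler_wpM2l (ltW tp) DK) _.
  by rewrite mulrA mulrCA mulfV ?gt_eqF // mulr1.
nra.
Qed.
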